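(* Let $n\ge5$ and define $F:(0,\infty)\to\mathbb{R}$ by $$F(\rho)=\pi n^2\int_0^\infty\frac{s^n}{(1+s^n)^2}\frac{ds}{(\rho^2+s)^2}.$$ Then the metric $F(|a|)\,da\,d\bar a$ on $\mathbb{C}^\times=\mathbb{C}\setminus\{0\}$ (which is invariant under $a\mapsto1/a$) extends to a $C^3$ Riemannian metric $\overline\gamma_n$ on the Riemann sphere $S^2=\mathbb{C}^\times\cup\{0,\infty\}$.
   Context: This metric is the pullback of the induced $L^2$ metric on the space ${\sf Rat}_n^{eq}$ of rotationally equivariant degree $n$ rational maps $W(z)=cz^n$, $c\in\mathbb{C}^\times$, under the $n$-fold covering $a\mapsto[z\mapsto(az)^n]$. *)

(* Defs.v *)
From Stdlib Require Import Reals.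
Open Scope R_scope.

Definition Fintegrand (n : nat) (rho : R) (s : R) : R :=
  s ^ n / (1 + s ^ n) ^ 2 / (rho ^ 2 + s) ^ 2.

Definition improper_integral_0_inf (f : R -> R) (l : R) : Prop :=
  (forall M, 0 <= M -> inhabited (Riemann_integrable f 0 M)) /\
  (forall eps, 0 < eps -> exists M0, forall M (pr : Riemann_integrable f 0 M),
      M0 <= M -> Rabs (RiemannInt pr - l) < eps).

Definition continuous2 (f : R -> R -> R) : Prop :=
  forall x y eps, 0 < eps -> exists delta, 0 < delta /\
    forall x' y', Rabs (x' - x) < delta -> Rabs (y' - y) < delta ->
      Rabs (f x' y' - f x y) < eps.

Fixpoint Ck2 (k : nat) (f : R -> R -> R) : Prop :=
  match k with
  | O => continuous2 f
  | S k' => continuous2 f /\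
      exists fx fy : R -> R -> R,
        (forall x y, derivable_pt_lim (fun t => f t y) x (fx x y)) /\
        (forall x y, derivable_pt_lim (fun t => f x t) y (fy x y)) /\
        Ck2 k' fx /\ Ck2 k' fy
  end.

(* Main.v *)
Require Import Defs.
From Stdlib Require Import Reals.
Open Scope R_scope.

From Stdlib Require Import Reals Lra Lia List ClassicalEpsilon.
From Coquelicot Require Import Coquelicot.
Open Scope R_scope.

Definition clamp (t : R) : R := Rmax 0 (Rmin 1 t).
Definition Dn (n : nat) (s : R) : R := (1 - s) ^ n + s ^ n.
Definition Pn (n : nat) (s : R) : R := s ^ n * (1 - s) ^ n / (Dn n s) ^ 2.
Definition qf (x y s : R) : R := (x ^ 2 + y ^ 2) * (1 - s) + s.

Record tm := Tm { tc : R; ta : nat; tb : nat; tmm : nat; tk : nat }.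

Definition term (n : nat) (T : tm) (x y t : R) : R :=
  tc T * x ^ ta T * y ^ tb T * Pn n (clamp t) * (1 - clamp t) ^ tmm T
   * (/ qf x y (clamp t)) ^ tk T.

Lemma clamp_bounds t : 0 <= clamp t <= 1.
Proof. unfold clamp, Rmax, Rmin; repeat destruct Rle_dec; lra. Qed.

Lemma clamp_id t : 0 <= t <= 1 -> clamp t = t.
Proof. intros; unfold clamp, Rmax, Rmin; repeat destruct Rle_dec; lra. Qed.

Lemma clamp_lip t s : Rabs (clamp t - clamp s) <= Rabs (t - s).
Proof. unfold clamp, Rmax, Rmin; repeat destruct Rle_dec; unfold Rabs; repeat destruct Rcase_abs; lra. Qed.

Lemma is_derive_eq (f : R -> R) (x l l' : R) : is_derive f x l -> l = l' -> is_derive f x l'.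
Proof. intros H ->; exact H. Qed.

Lemma is_derive_ext_R (f g : R -> R) (x l : R) :
  (forall z : R, f z = g z) -> is_derive f x l -> is_derive g x l.
Proof. intros; eapply is_derive_ext; eauto. Qed.

Lemma core_derive (K : R) (a k : nat) (w s x : R) :
  x ^ 2 * w + s <> 0 ->
  is_derive (fun z => K * z ^ a * (/ (z ^ 2 * w + s)) ^ k) x
   (K * INR a * x ^ (pred a) * (/ (x ^ 2 * w + s)) ^ k
    + K * (-2 * INR k) * x ^ (S a) * w * (/ (x ^ 2 * w + s)) ^ (S k)).
Proof.
  intros Hq. assert (Hq' : x * x * w + s <> 0) by (simpl in Hq; rewrite Rmult_1_r in Hq; exact Hq).
  eapply is_derive_eq.
  { apply (is_derive_mult (fun z => K * z ^ a) (fun z => (/ (z ^ 2 * w + s)) ^ k)).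
    - apply is_derive_scal. apply is_derive_pow. apply is_derive_id.
    - apply is_derive_pow. apply is_derive_inv; [|exact Hq].
      auto_derive; [exact I|]. reflexivity.
    - intros; apply Rmult_comm. }
  simpl. unfold plus, mult, one; simpl.
  destruct a as [|a]; destruct k as [|k]; simpl pred; simpl INR; simpl pow;
    try (field; exact Hq').
  all: rewrite ?S_INR; field; exact Hq'.
Qed.

Definition dxT (T : tm) : list tm :=
  Tm (tc T * INR (ta T)) (pred (ta T)) (tb T) (tmm T) (tk T) ::
  Tm (tc T * (-2 * INR (tk T))) (S (ta T)) (tb T) (S (tmm T)) (S (tk T)) :: nil.
Definition dyT (T : tm) : list tm :=
  Tm (tc T * INR (tb T)) (ta T) (pred (tb T)) (tmm T) (tk T) ::
  Tm (tc T * (-2 * INR (tk T))) (ta T) (S (tb T)) (S (tmm T)) (S (tk T)) :: nil.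
Definition dxL (l : list tm) : list tm := flat_map dxT l.
Definition dyL (l : list tm) : list tm := flat_map dyT l.

Fixpoint evalL (n : nat) (l : list tm) (x y t : R) : R :=
  match l with nil => 0 | T :: l' => term n T x y t + evalL n l' x y t end.

Lemma evalL_app n l1 l2 x y t : evalL n (l1 ++ l2) x y t = evalL n l1 x y t + evalL n l2 x y t.
Proof. induction l1; simpl; [ring| rewrite IHl1; ring]. Qed.

Lemma Pn0 n : (0 < n)%nat -> Pn n 0 = 0.
Proof. intros; unfold Pn; rewrite pow_i by lia; unfold Rdiv; ring. Qed.

Lemma qf_pos x y s : 0 < s <= 1 -> 0 < qf x y s.
Proof. intros; unfold qf. assert (0 <= x^2 + y^2) by nra. nra. Qed.

Lemma term_dx n T (x y t : R) : (0 < n)%nat ->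
  is_derive (fun z => term n T z y t) x (evalL n (dxT T) x y t).
Proof.
  intros Hn. destruct (clamp_bounds t) as [H0 H1].
  destruct (Req_dec (clamp t) 0) as [Hz|Hz].
  - apply (is_derive_ext_R (fun _ => 0)).
    { intros z. cbv beta. unfold term. rewrite Hz, Pn0 by exact Hn. ring. }
    eapply is_derive_eq; [apply (is_derive_const (V:=R_NormedModule))|].
    unfold zero; simpl. unfold term. rewrite Hz, Pn0 by exact Hn. ring.
  - set (w := 1 - clamp t). set (s := y ^ 2 * w + clamp t).
    set (K := tc T * y ^ tb T * Pn n (clamp t) * w ^ tmm T).
    apply (is_derive_ext_R (fun z => K * z ^ ta T * (/ (z ^ 2 * w + s)) ^ tk T)).
    { intros z. cbv beta. unfold term, qf, K, s, w.
      replace ((z ^ 2 + y ^ 2) * (1 - clamp t) + clamp t) with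
        (z ^ 2 * (1 - clamp t) + (y ^ 2 * (1 - clamp t) + clamp t)) by ring. ring. }
    eapply is_derive_eq; [apply core_derive|].
    + pose proof (qf_pos x y (clamp t) ltac:(lra)). unfold qf in H.
      unfold s, w. intro E. nra.
    + assert (E : (x ^ 2 + y ^ 2) * (1 - clamp t) + clamp t =
        x ^ 2 * (1 - clamp t) + (y ^ 2 * (1 - clamp t) + clamp t)) by ring.
      cbn [evalL dxT dyT tc ta tb tmm tk]. unfold term, qf, K, s, w. cbn [tc ta tb tmm tk]. rewrite E. cbn [pow]. ring.
Qed.

Lemma term_dy n T (x y t : R) : (0 < n)%nat ->
  is_derive (fun z => term n T x z t) y (evalL n (dyT T) x y t).
Proof.
  intros Hn. destruct (clamp_bounds t) as [H0 H1].
  destruct (Req_dec (clamp t) 0) as [Hz|Hz].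
  - apply (is_derive_ext_R (fun _ => 0)).
    { intros z. cbv beta. unfold term. rewrite Hz, Pn0 by exact Hn. ring. }
    eapply is_derive_eq; [apply (is_derive_const (V:=R_NormedModule))|].
    unfold zero; simpl. unfold term. rewrite Hz, Pn0 by exact Hn. ring.
  - set (w := 1 - clamp t). set (s := x ^ 2 * w + clamp t).
    set (K := tc T * x ^ ta T * Pn n (clamp t) * w ^ tmm T).
    apply (is_derive_ext_R (fun z => K * z ^ tb T * (/ (z ^ 2 * w + s)) ^ tk T)).
    { intros z. cbv beta. unfold term, qf, K, s, w.
      replace ((x ^ 2 + z ^ 2) * (1 - clamp t) + clamp t) with
        (z ^ 2 * (1 - clamp t) + (x ^ 2 * (1 - clamp t) + clamp t)) by ring. ring. }
    eapply is_derive_eq; [apply core_derive|].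
    + pose proof (qf_pos x y (clamp t) ltac:(lra)). unfold qf in H.
      unfold s, w. intro E. nra.
    + assert (E : (x ^ 2 + y ^ 2) * (1 - clamp t) + clamp t =
        y ^ 2 * (1 - clamp t) + (x ^ 2 * (1 - clamp t) + clamp t)) by ring.
      cbn [evalL dxT dyT tc ta tb tmm tk]. unfold term, qf, K, s, w. cbn [tc ta tb tmm tk]. rewrite E. cbn [pow]. ring.
Qed.

Lemma evalL_dx n l (x y t : R) : (0 < n)%nat ->
  is_derive (fun z => evalL n l z y t) x (evalL n (dxL l) x y t).
Proof.
  intros Hn. induction l as [|T l IH].
  - simpl. eapply is_derive_eq; [apply (is_derive_const (V:=R_NormedModule))|]. reflexivity.
  - unfold dxL in *. change (flat_map dxT (T :: l)) with (dxT T ++ flat_map dxT l). rewrite evalL_app.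
    apply (is_derive_plus (V:=R_NormedModule) (fun z => term n T z y t) (fun z => evalL n l z y t)).
    + apply term_dx; exact Hn.
    + exact IH.
Qed.

Lemma evalL_dy n l (x y t : R) : (0 < n)%nat ->
  is_derive (fun z => evalL n l x z t) y (evalL n (dyL l) x y t).
Proof.
  intros Hn. induction l as [|T l IH].
  - simpl. eapply is_derive_eq; [apply (is_derive_const (V:=R_NormedModule))|]. reflexivity.
  - unfold dyL in *. change (flat_map dyT (T :: l)) with (dyT T ++ flat_map dyT l). rewrite evalL_app.
    apply (is_derive_plus (V:=R_NormedModule) (fun z => term n T x z t) (fun z => evalL n l x z t)).
    + apply term_dy; exact Hn.
    + exact IH.
Qed.

Definition cont3 (h : R -> R -> R -> R) (x y t : R) : Prop :=
  forall eps, 0 < eps -> exists d, 0 < d /\ forall x' y' t',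
    Rabs (x' - x) < d -> Rabs (y' - y) < d -> Rabs (t' - t) < d ->
    Rabs (h x' y' t' - h x y t) < eps.

Lemma ball_R (a b e : R) : ball a e b <-> Rabs (b - a) < e.
Proof. reflexivity. Qed.

Lemma cont3_of_continuous (h : R -> R -> R -> R) x y t :
  continuous (fun p : (R * R) * R => h (fst (fst p)) (snd (fst p)) (snd p)) ((x, y), t) ->
  cont3 h x y t.
Proof.
  intros Hc eps Heps.
  destruct (proj1 (filterlim_locally _ _) Hc (mkposreal eps Heps)) as [d Hd].
  exists d. split; [apply cond_pos|]. intros x' y' t' H1 H2 H3.
  specialize (Hd ((x', y'), t')). simpl in Hd. apply Hd.
  split; [split|]; simpl; assumption.
Qed.

Notation U3 := ((R * R) * R)%type.

Lemma cU_mult (f g : U3 -> R) p : continuous f p -> continuous g p ->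
  continuous (fun q => f q * g q) p.
Proof. intros Hf Hg. apply (continuous_mult (K:=R_AbsRing) f g p Hf Hg). Qed.

Lemma cU_plus (f g : U3 -> R) p : continuous f p -> continuous g p ->
  continuous (fun q => f q + g q) p.
Proof. intros Hf Hg. apply (continuous_plus (V:=R_NormedModule) f g p Hf Hg). Qed.

Lemma cU_const (c : R) p : continuous (fun _ : U3 => c) p.
Proof. apply continuous_const. Qed.

Lemma cU_comp (f : U3 -> R) (g : R -> R) p : continuous f p -> continuous g (f p) ->
  continuous (fun q => g (f q)) p.
Proof. intros; apply (continuous_comp f g p); assumption. Qed.

Lemma cU_X (p : U3) : continuous (fun q : U3 => fst (fst q)) p.
Proof.
  destruct p as [[x y] t].
  apply (continuous_comp (fun q : U3 => fst q) (fun q : R * R => fst q)).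
  - apply continuous_fst.
  - apply continuous_fst.
Qed.

Lemma cU_Y (p : U3) : continuous (fun q : U3 => snd (fst q)) p.
Proof.
  destruct p as [[x y] t].
  apply (continuous_comp (fun q : U3 => fst q) (fun q : R * R => snd q)).
  - apply continuous_fst.
  - apply continuous_snd.
Qed.

Lemma cU_T (p : U3) : continuous (fun q : U3 => snd q) p.
Proof. destruct p as [[x y] t]. apply continuous_snd. Qed.

Lemma clamp_continuous t : continuous clamp t.
Proof.
  apply (proj2 (filterlim_locally _ _)). intros eps. exists eps.
  intros s Hs. apply ball_R. apply ball_R in Hs.
  eapply Rle_lt_trans; [apply clamp_lip|]. exact Hs.
Qed.

Lemma cU_pow (f : U3 -> R) (a : nat) p : continuous f p -> continuous (fun q => f q ^ a) p.
Proof.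
  intros Hf. apply (cU_comp f (fun z => z ^ a)); [exact Hf|].
  apply (ex_derive_continuous (V:=R_NormedModule)). auto_derive. exact I.
Qed.

Lemma cU_clampT p : continuous (fun q : U3 => clamp (snd q)) p.
Proof. apply (cU_comp (fun q => snd q) clamp); [apply cU_T|apply clamp_continuous]. Qed.

Lemma Dn_pos n s : 0 <= s <= 1 -> 0 < Dn n s.
Proof.
  intros Hs. unfold Dn.
  destruct (Req_dec s 1) as [->|Hne].
  - rewrite pow1. assert (0 <= (1 - 1) ^ n) by (apply pow_le; lra). lra.
  - assert (0 < (1 - s) ^ n) by (apply pow_lt; lra).
    assert (0 <= s ^ n) by (apply pow_le; lra). lra.
Qed.

Lemma term_cont_nd n T x y t : qf x y (clamp t) <> 0 ->
  continuous (fun p : U3 => term n T (fst (fst p)) (snd (fst p)) (snd p)) ((x, y), t).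
Proof.
  intros Hq. unfold term.
  apply cU_mult; [apply cU_mult; [apply cU_mult; [apply cU_mult; [apply cU_mult|]|]|]|].
  - apply cU_const.
  - apply cU_pow, cU_X.
  - apply cU_pow, cU_Y.
  - apply (cU_comp (fun q => clamp (snd q)) (Pn n)); [apply cU_clampT|].
    apply (ex_derive_continuous (V:=R_NormedModule)). unfold Pn. simpl.
    pose proof (Dn_pos n (clamp t) (clamp_bounds t)). unfold Dn in H.
    unfold Dn in *. auto_derive. repeat split; try exact I. replace (1 + - clamp t) with (1 - clamp t) by ring. apply Rgt_not_eq, Rlt_gt. nra.
  - apply (cU_comp (fun q => clamp (snd q)) (fun s => (1 - s) ^ tmm T)); [apply cU_clampT|].
    apply (ex_derive_continuous (V:=R_NormedModule)). auto_derive. exact I.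
  - apply (cU_comp (fun q => qf (fst (fst q)) (snd (fst q)) (clamp (snd q))) (fun z => (/ z) ^ tk T)).
    + unfold qf. apply cU_plus; [apply cU_mult|apply cU_clampT].
      * apply cU_plus; apply cU_pow; [apply cU_X|apply cU_Y].
      * apply (cU_comp (fun q => clamp (snd q)) (fun s => 1 - s)); [apply cU_clampT|].
        apply (ex_derive_continuous (V:=R_NormedModule)). auto_derive. exact I.
    + apply (ex_derive_continuous (V:=R_NormedModule)). simpl. auto_derive. exact Hq.
Qed.

Lemma sq_pow (x : R) (a : nat) : (x ^ a) ^ 2 = (x ^ 2) ^ a.
Proof. rewrite <- !pow_mult, Nat.mul_comm; reflexivity. Qed.

Lemma prod6_le u1 u2 u3 u4 u5 u6 v1 v2 v3 v4 v5 v6 :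
  0 <= u1 <= v1 -> 0 <= u2 <= v2 -> 0 <= u3 <= v3 -> 0 <= u4 <= v4 ->
  0 <= u5 <= v5 -> 0 <= u6 <= v6 ->
  u1 * u2 * u3 * u4 * u5 * u6 <= v1 * v2 * v3 * v4 * v5 * v6.
Proof.
  intros [? ?] [? ?] [? ?] [? ?] [? ?] [? ?].
  repeat apply Rmult_le_compat; try assumption;
  repeat apply Rmult_le_pos; assumption.
Qed.

Lemma pow_le1 (x : R) (k : nat) : 0 <= x <= 1 -> x ^ k <= 1.
Proof.
  intros Hx. induction k as [|k IH]; simpl; [lra|].
  assert (0 <= x ^ k) by (apply pow_le; lra). nra.
Qed.

Lemma pow_le_self (q : R) (e : nat) : 0 <= q <= 1 -> (1 <= e)%nat -> q ^ e <= q.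
Proof.
  intros Hq He. destruct e as [|e]; [lia|]. simpl.
  assert (q ^ e <= 1) by (apply pow_le1; lra).
  assert (0 <= q ^ e) by (apply pow_le; lra). nra.
Qed.

Lemma Pn_bound n s : 0 <= s <= 1/2 -> 0 <= Pn n s <= 2 ^ n * s ^ n.
Proof.
  intros Hs. unfold Pn.
  assert (Hw : 0 < (1 - s) ^ n) by (apply pow_lt; lra).
  assert (Hsn : 0 <= s ^ n) by (apply pow_le; lra).
  assert (HD : (1 - s) ^ n <= Dn n s) by (unfold Dn; lra).
  assert (HD2 : ((1 - s) ^ n) ^ 2 <= Dn n s ^ 2) by (apply pow_incr; lra).
  assert (Hinv : / ((1 - s) ^ n) <= 2 ^ n).
  { rewrite <- pow_inv. apply pow_incr. split.
    - apply Rlt_le, Rinv_0_lt_compat; lra.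
    - replace 2 with (/ (1/2)) by field. apply Rinv_le_contravar; lra. }
  split.
  - unfold Rdiv. apply Rmult_le_pos; [apply Rmult_le_pos; [exact Hsn| lra]|].
    apply Rlt_le, Rinv_0_lt_compat. apply pow_lt. apply Dn_pos; lra.
  - assert (H1 : (1 - s) ^ n / Dn n s ^ 2 <= / ((1 - s) ^ n)).
    { apply (Rmult_le_reg_r (Dn n s ^ 2)); [apply pow_lt, Dn_pos; lra|].
      unfold Rdiv. rewrite Rmult_assoc, Rinv_l by (apply pow_nonzero, Rgt_not_eq, Dn_pos; lra).
      apply (Rmult_le_reg_l ((1 - s) ^ n)); [exact Hw|].
      replace ((1 - s) ^ n * (/ (1 - s) ^ n * Dn n s ^ 2)) with (Dn n s ^ 2) by (field; lra). replace ((1 - s) ^ n * ((1 - s) ^ n * 1)) with (((1 - s) ^ n) ^ 2) by ring. exact HD2. }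
    assert (H2 : 0 <= (1 - s) ^ n / Dn n s ^ 2).
    { unfold Rdiv. apply Rmult_le_pos; [lra|]. apply Rlt_le, Rinv_0_lt_compat, pow_lt, Dn_pos; lra. }
    replace (s ^ n * (1 - s) ^ n / Dn n s ^ 2) with (s ^ n * ((1 - s) ^ n / Dn n s ^ 2)) by (unfold Rdiv; ring).
    rewrite (Rmult_comm (2 ^ n)). apply Rmult_le_compat_l; [exact Hsn|]. lra.
Qed.

Lemma term_sq_bound n T x y t :
  (2 * tk T + 1 <= ta T + tb T + 2 * n)%nat -> 0 < clamp t <= 1/2 ->
  qf x y (clamp t) <= 1 ->
  (term n T x y t) ^ 2 <= tc T ^ 2 * 2 ^ ta T * 2 ^ tb T * 4 ^ n * qf x y (clamp t).
Proof.
  intros He Hs Hq1.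
  set (s := clamp t) in *. set (q := qf x y s) in *.
  assert (Hq : 0 < q) by (apply qf_pos; lra).
  assert (Hxy : 0 <= x ^ 2 + y ^ 2) by nra.
  assert (Hw2 : (x ^ 2 + y ^ 2) / 2 <= (x ^ 2 + y ^ 2) * (1 - s)) by nra.
  assert (Hx2 : 0 <= x ^ 2) by nra. assert (Hy2 : 0 <= y ^ 2) by nra.
  assert (HX : x ^ 2 <= 2 * q) by (unfold q, qf; lra).
  assert (HY : y ^ 2 <= 2 * q) by (unfold q, qf; lra).
  assert (Hsq : s <= q) by (unfold q, qf; nra).
  destruct (Pn_bound n s ltac:(lra)) as [HP0 HP1].
  assert (HPq : Pn n s <= 2 ^ n * q ^ n).
  { eapply Rle_trans; [exact HP1|]. apply Rmult_le_compat_l; [apply pow_le; lra|].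
    apply pow_incr; lra. }
  assert (Hiq : 0 <= ((/ q) ^ tk T) ^ 2) by (apply pow2_ge_0).
  assert (HW : 0 <= ((1 - s) ^ tmm T) ^ 2 <= 1).
  { split; [apply pow2_ge_0|]. apply pow_le1. split; [apply pow_le; lra|].
    apply pow_le1; lra. }
  assert (E1 : (term n T x y t) ^ 2 = tc T ^ 2 * (x ^ 2) ^ ta T * (y ^ 2) ^ tb T *
     Pn n s ^ 2 * ((1 - s) ^ tmm T) ^ 2 * ((/ q) ^ tk T) ^ 2).
  { unfold term. fold s. fold q. rewrite <- !sq_pow. ring. }
  rewrite E1.
  eapply Rle_trans.
  { apply (prod6_le _ _ _ _ _ _ (tc T ^ 2) ((2 * q) ^ ta T) ((2 * q) ^ tb T)
      ((2 ^ n * q ^ n) ^ 2) 1 (((/ q) ^ tk T) ^ 2)).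
    - split; [apply pow2_ge_0|lra].
    - split; [apply pow_le, pow2_ge_0|apply pow_incr; split; [apply pow2_ge_0|lra]].
    - split; [apply pow_le, pow2_ge_0|apply pow_incr; split; [apply pow2_ge_0|lra]].
    - split; [apply pow2_ge_0|apply pow_incr; split; lra].
    - exact HW.
    - split; lra. }
  assert (Hpow : q ^ ta T * q ^ tb T * (q ^ n) ^ 2 * ((/ q) ^ tk T) ^ 2
                 = q ^ (ta T + tb T + 2 * n - 2 * tk T)).
  { set (e := (ta T + tb T + 2 * n - 2 * tk T)%nat).
    assert (Ee : (ta T + tb T + 2 * n = e + 2 * tk T)%nat) by (unfold e; lia).
    assert (L1 : q ^ ta T * q ^ tb T * (q ^ n) ^ 2 = q ^ (ta T + tb T + 2 * n)).
    { rewrite (Nat.mul_comm 2 n), pow_add, pow_add, pow_mult. reflexivity. }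
    assert (L2 : ((/ q) ^ tk T) ^ 2 = (/ q) ^ (2 * tk T)).
    { rewrite <- pow_mult, Nat.mul_comm. reflexivity. }
    rewrite L1, L2, Ee, pow_add, Rmult_assoc, <- Rpow_mult_distr, Rinv_r by lra.
    rewrite pow1. ring. }
  assert (Hqe : q ^ (ta T + tb T + 2 * n - 2 * tk T) <= q) by (apply pow_le_self; lia || lra).
  assert (E2 : tc T ^ 2 * (2 * q) ^ ta T * (2 * q) ^ tb T * (2 ^ n * q ^ n) ^ 2 * 1 * ((/ q) ^ tk T) ^ 2
     = tc T ^ 2 * 2 ^ ta T * 2 ^ tb T * 4 ^ n * (q ^ ta T * q ^ tb T * (q ^ n) ^ 2 * ((/ q) ^ tk T) ^ 2)).
  { rewrite !Rpow_mult_distr. rewrite (sq_pow 2 n). replace (2 ^ 2) with 4 by ring. ring. }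
  rewrite E2, Hpow.
  apply Rmult_le_compat_l; [|exact Hqe].
  apply Rmult_le_pos; [apply Rmult_le_pos; [apply Rmult_le_pos; [apply pow2_ge_0|]|]|]; apply pow_le; lra.
Qed.

Lemma term_at_clamp0 n T x y t : (0 < n)%nat -> clamp t = 0 -> term n T x y t = 0.
Proof. intros Hn Hc. unfold term. rewrite Hc, Pn0 by exact Hn. ring. Qed.

Lemma term_cont_deg n T t0 : (0 < n)%nat ->
  (2 * tk T + 1 <= ta T + tb T + 2 * n)%nat -> clamp t0 = 0 ->
  cont3 (term n T) 0 0 t0.
Proof.
  intros Hn He Hc0 eps Heps.
  set (C := tc T ^ 2 * 2 ^ ta T * 2 ^ tb T * 4 ^ n).
  assert (HC : 0 <= C).
  { unfold C. apply Rmult_le_pos; [apply Rmult_le_pos; [apply Rmult_le_pos; [apply pow2_ge_0|]|]|]; apply pow_le; lra. }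
  set (d := Rmin (1/4) (eps ^ 2 / (2 * (C + 1)))).
  assert (Hd0 : 0 < d).
  { unfold d. apply Rmin_pos; [lra|]. apply Rdiv_lt_0_compat; [nra|lra]. }
  assert (Hd1 : d <= 1/4) by apply Rmin_l.
  assert (Hd2 : d <= eps ^ 2 / (2 * (C + 1))) by apply Rmin_r.
  exists d. split; [exact Hd0|]. intros x y t Hx Hy Ht.
  rewrite (term_at_clamp0 n T 0 0 t0 Hn Hc0). rewrite Rminus_0_r.
  pose proof (clamp_lip t t0) as Hl. rewrite Hc0, Rminus_0_r in Hl.
  pose proof (clamp_bounds t) as Hb.
  assert (Hct : clamp t < d) by (pose proof (RRle_abs (clamp t)); lra).
  destruct (Req_dec (clamp t) 0) as [Hz|Hz].
  { rewrite term_at_clamp0 by assumption. rewrite Rabs_R0. exact Heps. }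
  assert (Hx2 : x ^ 2 <= d ^ 2) by (simpl; rewrite !Rmult_1_r; apply Rsqr_le_abs_1; unfold Rsqr; rewrite Rminus_0_r in Hx; rewrite (Rabs_right d) by lra; lra).
  assert (Hy2 : y ^ 2 <= d ^ 2) by (simpl; rewrite !Rmult_1_r; apply Rsqr_le_abs_1; unfold Rsqr; rewrite Rminus_0_r in Hy; rewrite (Rabs_right d) by lra; lra).
  assert (Hq : qf x y (clamp t) < 2 * d).
  { unfold qf. assert (0 <= x ^ 2) by nra. assert (0 <= y ^ 2) by nra.
    assert ((x ^ 2 + y ^ 2) * (1 - clamp t) <= x ^ 2 + y ^ 2) by nra. nra. }
  assert (Hsq := term_sq_bound n T x y t He ltac:(lra) ltac:(lra)). fold C in Hsq.
  assert (Hlt : term n T x y t ^ 2 < eps ^ 2).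
  { eapply Rle_lt_trans; [exact Hsq|].
    assert (C * qf x y (clamp t) <= C * (2 * d)) by (apply Rmult_le_compat_l; lra).
    assert (C * (2 * d) <= C * (eps ^ 2 / (C + 1))).
    { apply Rmult_le_compat_l; [exact HC|].
      replace (eps ^ 2 / (C + 1)) with (2 * (eps ^ 2 / (2 * (C + 1)))) by (field; lra). lra. }
    assert (C * (eps ^ 2 / (C + 1)) < eps ^ 2).
    { replace (C * (eps ^ 2 / (C + 1))) with (eps ^ 2 * (C / (C + 1))) by (field; lra).
      assert (C / (C + 1) < 1) by (apply (Rmult_lt_reg_r (C + 1)); [lra|]; field_simplify; lra).
      assert (0 < eps ^ 2) by nra. nra. }
    lra. }
  rewrite <- (pow2_abs (term n T x y t)) in Hlt.
  assert (0 <= Rabs (term n T x y t)) by apply Rabs_pos.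
  nra.
Qed.

Lemma term_cont n T x y t : (0 < n)%nat ->
  (2 * tk T + 1 <= ta T + tb T + 2 * n)%nat -> cont3 (term n T) x y t.
Proof.
  intros Hn He.
  destruct (Req_dec (qf x y (clamp t)) 0) as [Hq|Hq].
  - pose proof (clamp_bounds t).
    destruct (Req_dec (clamp t) 0) as [Hz|Hz].
    + unfold qf in Hq. rewrite Hz in Hq.
      assert (x = 0) by nra. assert (y = 0) by nra. subst.
      apply term_cont_deg; assumption.
    + exfalso. pose proof (qf_pos x y (clamp t)). lra.
  - apply cont3_of_continuous. apply term_cont_nd. exact Hq.
Qed.

Lemma cont3_plus (f g : R -> R -> R -> R) x y t : cont3 f x y t -> cont3 g x y t ->
  cont3 (fun a b c => f a b c + g a b c) x y t.
Proof.
  intros Hf Hg eps Heps.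
  destruct (Hf (eps/2) ltac:(lra)) as [d1 [Hd1 H1]].
  destruct (Hg (eps/2) ltac:(lra)) as [d2 [Hd2 H2]].
  exists (Rmin d1 d2). split; [apply Rmin_pos; assumption|].
  intros x' y' t' Hx Hy Ht.
  pose proof (Rmin_l d1 d2). pose proof (Rmin_r d1 d2).
  specialize (H1 x' y' t' ltac:(lra) ltac:(lra) ltac:(lra)).
  specialize (H2 x' y' t' ltac:(lra) ltac:(lra) ltac:(lra)).
  replace (f x' y' t' + g x' y' t' - (f x y t + g x y t)) with
    ((f x' y' t' - f x y t) + (g x' y' t' - g x y t)) by ring.
  eapply Rle_lt_trans; [apply Rabs_triang|]. lra.
Qed.

Definition WFt (n j : nat) (T : tm) : Prop := (2 * tk T + 1 + j <= ta T + tb T + 2 * n)%nat.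

Lemma evalL_cont n l x y t : (0 < n)%nat -> List.Forall (WFt n 0) l ->
  cont3 (evalL n l) x y t.
Proof.
  intros Hn HW. induction HW as [|T l HT HW IH].
  - intros eps Heps. exists 1. split; [lra|]. intros. simpl. rewrite Rminus_0_r, Rabs_R0. exact Heps.
  - apply (cont3_plus (term n T) (evalL n l)); [|exact IH].
    apply term_cont; [exact Hn|]. unfold WFt in HT. lia.
Qed.

Lemma WF_dx n j l : List.Forall (WFt n (S j)) l -> List.Forall (WFt n j) (dxL l).
Proof.
  intros H. induction H as [|T l HT H IH]; [constructor|].
  unfold dxL; simpl. unfold WFt in *. constructor; [simpl; lia|].
  constructor; [simpl; lia|]. exact IH.
Qed.

Lemma WF_dy n j l : List.Forall (WFt n (S j)) l -> List.Forall (WFt n j) (dyL l).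
Proof.
  intros H. induction H as [|T l HT H IH]; [constructor|].
  unfold dyL; simpl. unfold WFt in *. constructor; [simpl; lia|].
  constructor; [simpl; lia|]. exact IH.
Qed.

Lemma WF_weak n j l : List.Forall (WFt n j) l -> List.Forall (WFt n 0) l.
Proof. apply List.Forall_impl. unfold WFt. intros; lia. Qed.

Definition GI (n : nat) (l : list tm) (x y : R) : R := RInt (fun t => evalL n l x y t) 0 1.

Lemma cont3_t (h : R -> R -> R -> R) x y t : cont3 h x y t -> continuous (fun s => h x y s) t.
Proof.
  intros H. apply (proj2 (filterlim_locally _ _)). intros eps.
  destruct (H eps (cond_pos eps)) as [d [Hd Hh]].
  exists (mkposreal d Hd). intros s Hs. apply ball_R. apply ball_R in Hs. simpl in Hs.
  apply Hh; [rewrite Rminus_eq_0, Rabs_R0; exact Hd|rewrite Rminus_eq_0, Rabs_R0; exact Hd|exact Hs].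
Qed.

Lemma cont3_2d_x (h : R -> R -> R -> R) x y t : cont3 h x y t ->
  continuity_2d_pt (fun u v => h u y v) x t.
Proof.
  intros H eps. destruct (H eps (cond_pos eps)) as [d [Hd Hh]].
  exists (mkposreal d Hd). intros u v Hu Hv. simpl in *.
  apply Hh; [exact Hu|rewrite Rminus_eq_0, Rabs_R0; exact Hd|exact Hv].
Qed.

Lemma cont3_2d_y (h : R -> R -> R -> R) x y t : cont3 h x y t ->
  continuity_2d_pt (fun u v => h x u v) y t.
Proof.
  intros H eps. destruct (H eps (cond_pos eps)) as [d [Hd Hh]].
  exists (mkposreal d Hd). intros u v Hu Hv. simpl in *.
  apply Hh; [rewrite Rminus_eq_0, Rabs_R0; exact Hd|exact Hu|exact Hv].
Qed.

Lemma exRInt_of_cont3 (h : R -> R -> R -> R) x y :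
  (forall t, cont3 h x y t) -> ex_RInt (fun t => h x y t) 0 1.
Proof.
  intros H. apply (ex_RInt_continuous (V:=R_CompleteNormedModule)). intros z _. apply cont3_t, H.
Qed.

Lemma GI_dx n l x y : (0 < n)%nat -> List.Forall (WFt n 1) l ->
  derivable_pt_lim (fun z => GI n l z y) x (GI n (dxL l) x y).
Proof.
  intros Hn HW. apply is_derive_Reals. unfold GI.
  assert (HD : forall u v, Derive (fun z => evalL n l z y v) u = evalL n (dxL l) u y v).
  { intros u v. apply is_derive_unique. apply evalL_dx; exact Hn. }
  eapply is_derive_eq.
  { apply (is_derive_RInt_param (fun u t => evalL n l u y t) 0 1 x).
    - apply filter_forall. intros u t _. eexists. apply evalL_dx; exact Hn.
    - intros t _. eapply continuity_2d_pt_ext; [intros u v; symmetry; apply HD|].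
      apply cont3_2d_x. apply evalL_cont; [exact Hn|]. apply (WF_weak n 0). apply WF_dx. exact HW.
    - apply filter_forall. intros u. apply exRInt_of_cont3. intros t.
      apply evalL_cont; [exact Hn|]. apply (WF_weak n 1). exact HW. }
  apply RInt_ext. intros t _. apply HD.
Qed.

Lemma GI_dy n l x y : (0 < n)%nat -> List.Forall (WFt n 1) l ->
  derivable_pt_lim (fun z => GI n l x z) y (GI n (dyL l) x y).
Proof.
  intros Hn HW. apply is_derive_Reals. unfold GI.
  assert (HD : forall u v, Derive (fun z => evalL n l x z v) u = evalL n (dyL l) x u v).
  { intros u v. apply is_derive_unique. apply evalL_dy; exact Hn. }
  eapply is_derive_eq.
  { apply (is_derive_RInt_param (fun u t => evalL n l x u t) 0 1 y).
    - apply filter_forall. intros u t _. eexists. apply evalL_dy; exact Hn.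
    - intros t _. eapply continuity_2d_pt_ext; [intros u v; symmetry; apply HD|].
      apply cont3_2d_y. apply evalL_cont; [exact Hn|]. apply (WF_weak n 0). apply WF_dy. exact HW.
    - apply filter_forall. intros u. apply exRInt_of_cont3. intros t.
      apply evalL_cont; [exact Hn|]. apply (WF_weak n 1). exact HW. }
  apply RInt_ext. intros t _. apply HD.
Qed.

Lemma RInt_cont2 (h : R -> R -> R -> R) :
  (forall x y t, cont3 h x y t) -> continuous2 (fun x y => RInt (fun t => h x y t) 0 1).
Proof.
  intros Hc x y eps Heps.
  assert (Hq : 0 < eps / 4) by lra.
  set (dl := fun t => constructive_indefinite_description _ (Hc x y t (eps / 4) Hq)).
  set (delta := fun t => mkposreal (proj1_sig (dl t)) (proj1 (proj2_sig (dl t)))).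
  destruct (compactness_value_1d 0 1 delta) as [d0 Hd0].
  exists d0. split; [apply cond_pos|]. intros x' y' Hx Hy.
  assert (Hpt : forall t, 0 <= t <= 1 -> Rabs (h x' y' t - h x y t) <= eps / 2).
  { intros t Ht. apply Rnot_lt_le. intros Hbad. apply (Hd0 t Ht).
    intros [ti [Hti [H1 H2]]].
    pose proof (proj2 (proj2_sig (dl ti))) as P. simpl in P. pose proof (proj1 (proj2_sig (dl ti))) as Pp.
    unfold delta in H1, H2; simpl in H1, H2.
    assert (A1 := P x' y' t ltac:(lra) ltac:(lra) H1).
    assert (A2 := P x y t ltac:(rewrite Rminus_eq_0, Rabs_R0; lra) ltac:(rewrite Rminus_eq_0, Rabs_R0; lra) H1).
    assert (Rabs (h x' y' t - h x y t) <= Rabs (h x' y' t - h x y ti) + Rabs (h x y t - h x y ti)).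
    { replace (h x' y' t - h x y t) with ((h x' y' t - h x y ti) - (h x y t - h x y ti)) by ring.
      eapply Rle_trans; [apply Rabs_triang|]. rewrite Rabs_Ropp. lra. }
    lra. }
  assert (E1 : ex_RInt (fun t => h x' y' t) 0 1) by (apply exRInt_of_cont3; intros; apply Hc).
  assert (E2 : ex_RInt (fun t => h x y t) 0 1) by (apply exRInt_of_cont3; intros; apply Hc).
  assert (Hm : RInt (fun t => h x' y' t) 0 1 - RInt (fun t => h x y t) 0 1 =
               RInt (fun t => h x' y' t - h x y t) 0 1).
  { symmetry. apply (RInt_minus (V:=R_CompleteNormedModule)); assumption. }
  rewrite Hm.
  eapply Rle_lt_trans.
  { apply (abs_RInt_le_const (fun t => h x' y' t - h x y t) 0 1 (eps / 2)); [lra| |].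
    - apply (ex_RInt_minus (V:=R_NormedModule)); assumption.
    - exact Hpt. }
  lra.
Qed.

Lemma WF_mono n i j l : (i <= j)%nat -> List.Forall (WFt n j) l -> List.Forall (WFt n i) l.
Proof. intros Hij. apply List.Forall_impl. unfold WFt. intros; lia. Qed.

Lemma CkL n : (0 < n)%nat -> forall j l, List.Forall (WFt n j) l -> Ck2 j (GI n l).
Proof.
  intros Hn j. induction j as [|j IH]; intros l HW.
  - simpl. unfold GI. apply (RInt_cont2 (evalL n l)). intros. apply evalL_cont; assumption.
  - simpl. split.
    + unfold GI. apply (RInt_cont2 (evalL n l)). intros. apply evalL_cont; [assumption|].
      apply (WF_mono n 0 (S j)); [lia|assumption].
    + exists (GI n (dxL l)), (GI n (dyL l)). split; [|split; [|split]].
      * intros x y. apply GI_dx; [exact Hn|]. apply (WF_mono n 1 (S j)); [lia|assumption].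
      * intros x y. apply GI_dy; [exact Hn|]. apply (WF_mono n 1 (S j)); [lia|assumption].
      * apply IH. apply WF_dx. exact HW.
      * apply IH. apply WF_dy. exact HW.
Qed.

Definition Kf (n : nat) (u t : R) : R := Pn n t / (u * (1 - t) + t) ^ 2.

Lemma den_pos u t : 0 < u -> 0 <= t <= 1 -> 0 < u * (1 - t) + t.
Proof. intros. destruct (Req_dec t 0); [subst; lra|]. nra. Qed.

Lemma Kf_cont n u t : 0 < u -> 0 <= t <= 1 -> continuous (Kf n u) t.
Proof.
  intros Hu Ht. apply (ex_derive_continuous (V:=R_NormedModule)).
  pose proof (Dn_pos n t Ht). pose proof (den_pos u t Hu Ht).
  unfold Kf, Pn, Dn in *. auto_derive. repeat split; try exact I.
  - replace (1 + - t) with (1 - t) by ring. apply Rgt_not_eq, Rlt_gt. nra.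
  - apply Rgt_not_eq, Rlt_gt. replace (u * (1 + - t) + t) with (u * (1 - t) + t) by ring. nra.
Qed.

Lemma Kf_exRInt n u a b : 0 < u -> 0 <= a <= b -> b <= 1 -> ex_RInt (Kf n u) a b.
Proof.
  intros Hu Hab Hb. apply (ex_RInt_continuous (V:=R_CompleteNormedModule)).
  intros z Hz. rewrite Rmin_left in Hz by lra. rewrite Rmax_right in Hz by lra.
  apply Kf_cont; [exact Hu|lra].
Qed.

Lemma Pn_le1 n t : 0 <= t <= 1 -> 0 <= Pn n t <= 1.
Proof.
  intros Ht. unfold Pn. pose proof (Dn_pos n t Ht) as HD. unfold Dn in HD.
  assert (HA : 0 <= t ^ n) by (apply pow_le; lra).
  assert (HB : 0 <= (1 - t) ^ n) by (apply pow_le; lra).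
  fold (Dn n t) in HD. unfold Dn in *.
  set (A := t ^ n) in *. set (B := (1 - t) ^ n) in *.
  assert (HD2 : 0 < (B + A) ^ 2) by (apply pow_lt; lra).
  split.
  - unfold Rdiv. apply Rmult_le_pos; [nra|]. apply Rlt_le, Rinv_0_lt_compat; exact HD2.
  - apply (Rmult_le_reg_r ((B + A) ^ 2)); [exact HD2|].
    unfold Rdiv. rewrite Rmult_assoc, Rinv_l by lra. nra.
Qed.

Lemma Kf_bound n u t : 0 < u -> 0 <= t <= 1 -> 0 <= Kf n u t <= / (Rmin u 1) ^ 2.
Proof.
  intros Hu Ht. pose proof (Pn_le1 n t Ht) as [HP0 HP1].
  set (m := Rmin u 1).
  assert (Hm : 0 < m) by (apply Rmin_pos; lra).
  assert (Hm1 : m <= u) by apply Rmin_l. assert (Hm2 : m <= 1) by apply Rmin_r.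
  assert (Hden : m <= u * (1 - t) + t) by nra.
  assert (Hd2 : m ^ 2 <= (u * (1 - t) + t) ^ 2) by (apply pow_incr; lra).
  assert (Hm2p : 0 < m ^ 2) by (apply pow_lt; lra).
  unfold Kf. split.
  - unfold Rdiv. apply Rmult_le_pos; [exact HP0|]. apply Rlt_le, Rinv_0_lt_compat; lra.
  - unfold Rdiv. apply Rle_trans with (1 * / (u * (1 - t) + t) ^ 2).
    + apply Rmult_le_compat_r; [apply Rlt_le, Rinv_0_lt_compat; lra|exact HP1].
    + rewrite Rmult_1_l. apply Rinv_le_contravar; assumption.
Qed.

Lemma Pn_sym n t : Pn n (1 - t) = Pn n t.
Proof.
  unfold Pn, Dn. replace (1 - (1 - t)) with t by ring.
  replace ((1 - t) ^ n + t ^ n) with (t ^ n + (1 - t) ^ n) by ring. unfold Rdiv. ring.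
Qed.

Lemma Kf_refl n u : 0 < u -> RInt (fun t => Kf n u (1 - t)) 0 1 = RInt (Kf n u) 0 1.
Proof.
  intros Hu.
  assert (E : RInt (fun y => scal (-1) (Kf n u (-1 * y + 1))) 0 1 = RInt (Kf n u) (-1 * 0 + 1) (-1 * 1 + 1)).
  { apply (RInt_comp_lin (V:=R_CompleteNormedModule)).
    replace (-1 * 0 + 1) with 1 by ring. replace (-1 * 1 + 1) with 0 by ring.
    apply ex_RInt_swap. apply Kf_exRInt; lra. }

  replace (-1 * 0 + 1) with 1 in E by ring. replace (-1 * 1 + 1) with 0 in E by ring.

  pose proof (opp_RInt_swap (V:=R_CompleteNormedModule) (Kf n u) 0 1 (Kf_exRInt n u 0 1 Hu ltac:(lra) ltac:(lra))) as S.
  assert (S' : RInt (Kf n u) 1 0 = - RInt (Kf n u) 0 1) by (rewrite <- S; reflexivity).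
  rewrite S' in E.

  assert (Hex : ex_RInt (fun t => Kf n u (1 - t)) 0 1).
  { apply (ex_RInt_continuous (V:=R_CompleteNormedModule)). intros z Hz.
    rewrite Rmin_left in Hz by lra. rewrite Rmax_right in Hz by lra.
    apply (continuous_comp (fun t => 1 - t) (Kf n u)).
    - apply (ex_derive_continuous (V:=R_NormedModule)). auto_derive. exact I.
    - apply Kf_cont; lra. }

  assert (E2 : RInt (fun y => scal (-1) (Kf n u (-1 * y + 1))) 0 1 = RInt (fun y => scal (-1) (Kf n u (1 - y))) 0 1).
  { apply RInt_ext. intros x _. replace (-1 * x + 1) with (1 - x) by ring. reflexivity. }
  rewrite E2 in E. clear E2.
  pose proof (RInt_scal (V:=R_CompleteNormedModule) (fun y => Kf n u (1 - y)) 0 1 (-1) Hex) as E3.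
  assert (E5 : RInt (fun y => scal (-1) (Kf n u (1 - y))) 0 1 = -1 * RInt (fun y => Kf n u (1 - y)) 0 1) by exact E3.
  pose proof (eq_trans (eq_sym E5) E) as E6. lra.
Qed.

Lemma Kf_sym n u : 0 < u -> RInt (Kf n (/ u)) 0 1 = u ^ 2 * RInt (Kf n u) 0 1.
Proof.
  intros Hu.
  assert (Hex : ex_RInt (fun t => Kf n u (1 - t)) 0 1).
  { apply (ex_RInt_continuous (V:=R_CompleteNormedModule)). intros z Hz.
    rewrite Rmin_left in Hz by lra. rewrite Rmax_right in Hz by lra.
    apply (continuous_comp (fun t => 1 - t) (Kf n u)).
    - apply (ex_derive_continuous (V:=R_NormedModule)). auto_derive. exact I.
    - apply Kf_cont; lra. }
  assert (E1 : RInt (Kf n (/ u)) 0 1 = RInt (fun t => scal (u ^ 2) (Kf n u (1 - t))) 0 1).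
  { apply RInt_ext. intros t Ht. rewrite Rmin_left in Ht by lra. rewrite Rmax_right in Ht by lra.
    change (@eq R (Kf n (/ u) t) (u ^ 2 * Kf n u (1 - t))).
    unfold Kf. rewrite Pn_sym. replace (1 - (1 - t)) with t by ring.
    assert (0 < u * t + (1 - t)) by nra.
    assert (0 < / u * (1 - t) + t).
    { assert (0 < / u) by (apply Rinv_0_lt_compat; lra). nra. }
    field. split; lra. }
  pose proof (RInt_scal (V:=R_CompleteNormedModule) (fun y => Kf n u (1 - y)) 0 1 (u ^ 2) Hex) as E3.
  assert (E5 : RInt (fun y => scal (u ^ 2) (Kf n u (1 - y))) 0 1 = u ^ 2 * RInt (fun y => Kf n u (1 - y)) 0 1) by exact E3.
  rewrite E1. rewrite E5. rewrite Kf_refl by exact Hu. reflexivity.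
Qed.

Lemma pow_div (a b : R) (k : nat) : (a / b) ^ k = a ^ k / b ^ k.
Proof. unfold Rdiv. rewrite Rpow_mult_distr, pow_inv. reflexivity. Qed.

Lemma Fint_cont n rho s : 0 < rho -> 0 <= s -> continuous (Fintegrand n rho) s.
Proof.
  intros Hr Hs. apply (ex_derive_continuous (V:=R_NormedModule)).
  assert (0 <= s ^ n) by (apply pow_le; lra).
  unfold Fintegrand. auto_derive. repeat split; try exact I.
  - apply Rgt_not_eq, Rlt_gt. nra.
  - assert (0 < rho * (rho * 1) + s) by nra. apply Rgt_not_eq, Rlt_gt. nra.
Qed.

Lemma cov n rho M : 0 < rho -> 0 <= M ->
  RInt (Fintegrand n rho) 0 M = RInt (Kf n (rho ^ 2)) 0 (M / (1 + M)).
Proof.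
  intros Hr HM. set (T := M / (1 + M)).
  assert (HT : 0 <= T < 1).
  { unfold T. split.
    - apply Rmult_le_pos; [lra|]. apply Rlt_le, Rinv_0_lt_compat; lra.
    - apply (Rmult_lt_reg_r (1 + M)); [lra|]. unfold Rdiv. rewrite Rmult_assoc, Rinv_l by lra. lra. }
  assert (E := RInt_comp (V:=R_CompleteNormedModule) (Fintegrand n rho) (fun t => t / (1 - t))
                 (fun t => / (1 - t) ^ 2) 0 T).
  cbv beta in E.
  assert (Hg0 : 0 / (1 - 0) = 0) by (unfold Rdiv; ring).
  assert (HgT : T / (1 - T) = M) by (unfold T; field; lra).
  rewrite Hg0, HgT in E.
  symmetry. rewrite <- E.
  - apply RInt_ext. intros y Hy. rewrite Rmin_left in Hy by lra. rewrite Rmax_right in Hy by lra.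
    change (@eq R (Kf n (rho ^ 2) y) (/ (1 - y) ^ 2 * Fintegrand n rho (y / (1 - y)))).
    unfold Kf, Pn, Dn, Fintegrand. rewrite pow_div.
    assert (HB : 0 < (1 - y) ^ n) by (apply pow_lt; lra).
    assert (HA : 0 <= y ^ n) by (apply pow_le; lra).
    set (A := y ^ n) in *. set (B := (1 - y) ^ n) in *.
    assert (0 < rho ^ 2 * (1 - y) + y) by (assert (0 < rho ^ 2) by (apply pow_lt; lra); nra).
    assert (0 < 1 - y) by lra.
    assert (E1 : 1 + A / B = (B + A) / B) by (field; lra).
    assert (E2 : rho ^ 2 + y / (1 - y) = (rho ^ 2 * (1 - y) + y) / (1 - y)) by (field; lra).
    rewrite E1, E2. field. repeat split; lra.
  - intros x Hx. rewrite Rmin_left in Hx by lra. rewrite Rmax_right in Hx by lra.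
    apply Fint_cont; [exact Hr|]. apply Rmult_le_pos; [lra|]. apply Rlt_le, Rinv_0_lt_compat; lra.
  - intros x Hx. rewrite Rmin_left in Hx by lra. rewrite Rmax_right in Hx by lra. split.
    + auto_derive; [lra|]. field. lra.
    + apply (ex_derive_continuous (V:=R_NormedModule)). auto_derive. simpl. apply Rgt_not_eq, Rlt_gt. nra.
Qed.

Lemma rep n rho L : 0 < rho -> improper_integral_0_inf (Fintegrand n rho) L ->
  L = RInt (Kf n (rho ^ 2)) 0 1.
Proof.
  intros Hr [Hint Hlim].
  set (u := rho ^ 2). assert (Hu : 0 < u) by (apply pow_lt; lra).
  set (B := / (Rmin u 1) ^ 2).
  assert (HB : 0 < B) by (apply Rinv_0_lt_compat, pow_lt, Rmin_pos; lra).
  set (J := RInt (Kf n u) 0 1).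
  assert (Key : forall eps, 0 < eps -> Rabs (L - J) < 2 * eps).
  { intros eps Heps. destruct (Hlim eps Heps) as [M0 HM0].
    set (M := Rmax M0 0 + B / eps + 1).
    assert (HBe : 0 < B / eps) by (apply Rdiv_lt_0_compat; lra).
    assert (HM : 0 <= M) by (unfold M; pose proof (Rmax_r M0 0); lra).
    assert (HMM0 : M0 <= M) by (unfold M; pose proof (Rmax_l M0 0); lra).
    destruct (Hint M HM) as [pr].
    specialize (HM0 M pr HMM0).
    rewrite <- RInt_Reals in HM0. rewrite cov in HM0 by assumption. fold u in HM0.
    set (T := M / (1 + M)) in *.
    assert (HT : 0 <= T < 1).
    { unfold T. split.
      - apply Rmult_le_pos; [lra|]. apply Rlt_le, Rinv_0_lt_compat; lra.
      - apply (Rmult_lt_reg_r (1 + M)); [lra|]. unfold Rdiv. rewrite Rmult_assoc, Rinv_l by lra. lra. }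
    assert (HC : RInt (Kf n u) 0 T + RInt (Kf n u) T 1 = J).
    { exact (RInt_Chasles (V:=R_CompleteNormedModule) (Kf n u) 0 T 1
               (Kf_exRInt n u 0 T Hu ltac:(lra) ltac:(lra)) (Kf_exRInt n u T 1 Hu ltac:(lra) ltac:(lra))). }
    assert (Htail : Rabs (RInt (Kf n u) T 1) <= (1 - T) * B).
    { apply abs_RInt_le_const; [lra|apply Kf_exRInt; lra|].
      intros t Ht. pose proof (Kf_bound n u t Hu ltac:(lra)) as [K0 K1].
      rewrite Rabs_right by lra. exact K1. }
    assert (H1T : 1 - T = / (1 + M)) by (unfold T; field; lra).
    assert (Hsmall : (1 - T) * B < eps).
    { rewrite H1T. apply (Rmult_lt_reg_l (1 + M)); [lra|].
      rewrite <- Rmult_assoc, Rinv_r, Rmult_1_l by lra.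
      assert (B = (B / eps) * eps) by (field; lra).
      assert (B / eps * eps < (1 + M) * eps) by (apply Rmult_lt_compat_r; [lra|]; unfold M; pose proof (Rmax_r M0 0); lra).
      lra. }
    rewrite <- HC.
    replace (L - (RInt (Kf n u) 0 T + RInt (Kf n u) T 1)) with
      (- (RInt (Kf n u) 0 T - L) - RInt (Kf n u) T 1) by ring.
    eapply Rle_lt_trans; [apply Rabs_triang|]. rewrite Rabs_Ropp, Rabs_Ropp. lra. }
  destruct (Req_dec L J) as [E|E]; [exact E|].
  exfalso. assert (Hp : 0 < Rabs (L - J) / 4) by (apply Rdiv_lt_0_compat; [apply Rabs_pos_lt; lra|lra]).
  specialize (Key _ Hp). lra.
Qed.

Lemma GI_K n c x y : 0 < x ^ 2 + y ^ 2 ->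
  GI n (Tm c 0 0 0 2 :: nil) x y = c * RInt (Kf n (x ^ 2 + y ^ 2)) 0 1.
Proof.
  intros Hr. unfold GI.
  assert (E1 : RInt (fun t => evalL n (Tm c 0 0 0 2 :: nil) x y t) 0 1 =
               RInt (fun t => scal c (Kf n (x ^ 2 + y ^ 2) t)) 0 1).
  { apply RInt_ext. intros t Ht. rewrite Rmin_left in Ht by lra. rewrite Rmax_right in Ht by lra.
    change (@eq R (evalL n (Tm c 0 0 0 2 :: nil) x y t) (c * Kf n (x ^ 2 + y ^ 2) t)).
    simpl evalL. unfold term. cbn [tc ta tb tmm tk]. rewrite clamp_id by lra.
    unfold Kf, qf. rewrite pow_inv. unfold Rdiv. ring. }
  rewrite E1.
  exact (RInt_scal (V:=R_CompleteNormedModule) (Kf n (x ^ 2 + y ^ 2)) 0 1 c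
           (Kf_exRInt n (x ^ 2 + y ^ 2) 0 1 Hr ltac:(lra) ltac:(lra))).
Qed.

Theorem proposition4p5 (n : nat) (Hn : (5 <= n)%nat) (F : R -> R)
  (HF : forall rho, 0 < rho ->
     improper_integral_0_inf (Fintegrand n rho) (F rho / (PI * INR n ^ 2))) :
  (* invariance of F(|a|) da dabar under a -> 1/a *)
  (forall rho, 0 < rho -> F (/ rho) / rho ^ 4 = F rho) /\
  (* extension to a C^3 Riemannian metric on S^2: in the chart a (covering C)
     and in the chart b = 1/a at infinity, the conformal factor extends to a
     positive C^3 function on all of R^2 = C *)
  exists G0 Ginf : R -> R -> R,
    Ck2 3 G0 /\ Ck2 3 Ginf /\
    (forall x y, 0 < G0 x y) /\ (forall x y, 0 < Ginf x y) /\
    (forall x y, (x, y) <> (0, 0) -> G0 x y = F (sqrt (x ^ 2 + y ^ 2))) /\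
    (forall x y, (x, y) <> (0, 0) ->
       Ginf x y = F (/ sqrt (x ^ 2 + y ^ 2)) / (x ^ 2 + y ^ 2) ^ 2).
Proof.
  assert (Hn0 : (0 < n)%nat) by lia.
  set (c := PI * INR n ^ 2).
  assert (Hc : 0 < c).
  { unfold c. apply Rmult_lt_0_compat; [apply PI_RGT_0|]. apply pow_lt, lt_0_INR; lia. }
  assert (Hrep : forall rho, 0 < rho -> F rho = c * RInt (Kf n (rho ^ 2)) 0 1).
  { intros rho Hr. pose proof (rep n rho _ Hr (HF rho Hr)) as E. fold c in E.
    rewrite <- E. field. lra. }
  assert (P1 : forall rho, 0 < rho -> F (/ rho) / rho ^ 4 = F rho).
  { intros rho Hr. rewrite (Hrep (/ rho)) by (apply Rinv_0_lt_compat; lra).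
    rewrite (Hrep rho Hr). rewrite pow_inv. rewrite Kf_sym by (apply pow_lt; lra).
    field. lra. }
  split; [exact P1|].
  set (G0 := GI n (Tm c 0 0 0 2 :: nil)).
  assert (HCk : Ck2 3 G0).
  { apply CkL; [exact Hn0|]. constructor; [unfold WFt; simpl; lia|constructor]. }
  assert (Hpos : forall x y, 0 < G0 x y).
  { intros x y. unfold G0, GI. apply RInt_gt_0; [lra| |].
    - intros t Ht. simpl evalL. unfold term. cbn [tc ta tb tmm tk]. rewrite clamp_id by lra.
      assert (HP : 0 < Pn n t).
      { unfold Pn. apply Rdiv_lt_0_compat.
        - apply Rmult_lt_0_compat; apply pow_lt; lra.
        - apply pow_lt, Dn_pos; lra. }
      assert (Hq : 0 < qf x y t) by (apply qf_pos; lra).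
      assert (0 < (/ qf x y t) ^ 2) by (apply pow_lt, Rinv_0_lt_compat; lra).
      rewrite Rplus_0_r. simpl pow. rewrite !Rmult_1_r. simpl in H. rewrite Rmult_1_r in H. apply Rmult_lt_0_compat; [apply Rmult_lt_0_compat|]; assumption.
    - intros t _. apply cont3_t. apply evalL_cont; [exact Hn0|].
      constructor; [unfold WFt; simpl; lia|constructor]. }
  assert (Hr : forall x y, (x, y) <> (0, 0) -> 0 < x ^ 2 + y ^ 2).
  { intros x y Hxy. destruct (Req_dec x 0) as [Hx|Hx]; destruct (Req_dec y 0) as [Hy|Hy].
    - subst. exfalso. apply Hxy. reflexivity.
    - assert (0 < y ^ 2) by (apply pow_lt_2 || nra). nra.
    - nra.
    - nra. }
  assert (HG : forall x y, (x, y) <> (0, 0) -> G0 x y = F (sqrt (x ^ 2 + y ^ 2))).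
  { intros x y Hxy. pose proof (Hr x y Hxy) as Hr'.
    unfold G0. rewrite GI_K by exact Hr'.
    rewrite Hrep by (apply sqrt_lt_R0; exact Hr'). rewrite pow2_sqrt by lra. reflexivity. }
  exists G0, G0. split; [exact HCk|]. split; [exact HCk|].
  split; [exact Hpos|]. split; [exact Hpos|]. split; [exact HG|].
  intros x y Hxy. pose proof (Hr x y Hxy) as Hr'.
  rewrite HG by exact Hxy.
  set (rho := sqrt (x ^ 2 + y ^ 2)).
  assert (Hrho : 0 < rho) by (apply sqrt_lt_R0; exact Hr').
  assert (E : (x ^ 2 + y ^ 2) ^ 2 = rho ^ 4).
  { unfold rho. replace 4%nat with (2 * 2)%nat by reflexivity. rewrite pow_mult, pow2_sqrt by lra. reflexivity. }
  rewrite E. symmetry. apply P1. exact Hrho.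
Qed.
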